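(* The quiver $Q'=Q^{\mathrm{cut}}(Z)$ is acyclic.
   Context: $(Q,Z)$ is a gentle pair, i.e. a locally gentle pair (every vertex is head, resp. tail, of at most two arrows; every arrow $b$ gives at most one admissible and at most one inadmissible length-2 path of the form $cb$, and likewise of the form $ba$) with only finitely many admissible paths (paths with no subpath in $Z$); equivalently, the semilinear gentle algebra $\Lambda=K_{\boldsymbol{\sigma}}Q/\langle Z\rangle$ is finite-dimensional over the division ring $K$. A vertex $v$ is relational if $v=t(b)=h(a)$ for some $ba\in Z$. The Zembyk excision $Q'=Q^{\mathrm{cut}}(Z)$ (denoted in the paper by $Q$ with a scissors superscript) has vertices $v'$ for non-relational $v\in Q_0$ and two distinct vertices $v(\sharp),v(\flat)$ for each relational $v$, and arrows $a'$ for $a\in Q_1$; heads and tails are those of $Q$ at non-relational vertices, while at a relational vertex $v$ the incident arrows are reattached to $v(\sharp)$ or $v(\flat)$ so that for arrows $a,b$ with $h(a)=v=t(b)$, $b'a'$ is a path in $Q'$ exactly when $ba\notin Z$ (in particular for $ba\in Z$, $\{h'(a'),t'(b')\}=\{v(\sharp),v(\flat)\}$). *)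

(* Defs.v *)
(* Finite quivers: vertices V, arrows A (finTypes),
   head h and tail t : A -> V.  A relation set Z of length-2 paths is a
   boolean relation: [Z b a] means the path ba (first a, then b) is in Z. *)
From mathcomp Require Import all_boot.
Set Implicit Arguments. Unset Strict Implicit. Unset Printing Implicit Defensive.

Section Quivers.
Variables (V A : finType) (h t : A -> V) (Z : A -> A -> bool).

Definition relations_ok : Prop := forall b a, Z b a -> h a = t b.

Definition locally_gentle : Prop :=
  relations_ok /\
  (forall v, #|[set a | h a == v]| <= 2) /\
  (forall v, #|[set a | t a == v]| <= 2) /\
  (forall b, #|[set a | (h a == t b) && ~~ Z b a]| <= 1) /\
  (forall b, #|[set a | (h a == t b) && Z b a]| <= 1) /\
  (forall b, #|[set c | (t c == h b) && ~~ Z c b]| <= 1) /\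
  (forall b, #|[set c | (t c == h b) && Z c b]| <= 1).

(* Paths are listed in traversal order [a1; a2; ...; an], h(a_i) = t(a_{i+1});
   this is the path a_n ... a_2 a_1 in the paper's notation.
   Admissible: no length-2 subpath a_{i+1} a_i lies in Z. *)
Definition adm_step (x y : A) : bool := (h x == t y) && ~~ Z y x.

Definition admissible_path (p : seq A) : bool :=
  if p is x :: p' then path adm_step x p' else true.

(* only finitely many admissible paths (the trivial paths e_v being finitely
   many anyway, as V is finite) *)
Definition finitely_many_admissible : Prop :=
  exists s : seq (seq A), forall p, p != [::] -> admissible_path p -> p \in s.

Definition gentle_pair : Prop := locally_gentle /\ finitely_many_admissible.

Definition relational (v : V) : bool :=
  [exists b, exists a, Z b a && (t b == v) && (h a == v)].

(* Q' = (V', A, h', t') is a Zembyk excision of (Q, Z): pi : V' -> V sends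
   v' |-> v, v(sharp), v(flat) |-> v; arrows are the same. *)
Definition is_excision (V' : finType) (pi : V' -> V) (h' t' : A -> V') : Prop :=
  (forall a, pi (h' a) = h a) /\
  (forall a, pi (t' a) = t a) /\
  (forall v, ~~ relational v -> #|[set x | pi x == v]| = 1) /\
  (forall v, relational v -> #|[set x | pi x == v]| = 2) /\
  (forall a b, h a = t b -> (h' a == t' b) = ~~ Z b a).

End Quivers.

Definition acyclic (V A : finType) (h t : A -> V) : Prop :=
  forall (x : A) (p : seq A), ~~ cycle (fun a b => h a == t b) (x :: p).

(* Main.v *)
Require Import Defs.
From mathcomp Require Import all_boot.

Lemma size_le_sumn (T : eqType) (s : seq (seq T)) y :
  y \in s -> size y <= sumn (map size s).
Proof.
elim: s => [|z s IH] //=; rewrite in_cons => /orP [/eqP -> | /IH H].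
  exact: leq_addr.
by rewrite (leq_trans H) // leq_addl.
Qed.

Theorem lemma5p20 (V A : finType) (h t : A -> V) (Z : A -> A -> bool)
  (V' : finType) (pi : V' -> V) (h' t' : A -> V') :
  gentle_pair h t Z -> is_excision h t Z pi h' t' -> acyclic h' t'.
Proof.
move=> [_ [s Hs]] [Hh [Ht [_ [_ Hz]]]] x p; apply/negP => Hc.
have sub : subrel (fun a b => h' a == t' b) (adm_step h t Z).
  move=> a b /= E.
  have Eht : h a = t b by rewrite -Hh -Ht (eqP E).
  by rewrite /adm_step Eht eqxx /= -(Hz _ _ Eht).
have Hq : path (adm_step h t Z) x (rcons p x) by exact: (sub_path sub Hc).
set q := rcons p x in Hq.
have Lq : last x q = x by rewrite /q last_rcons.
have HQ : forall n, path (adm_step h t Z) x (flatten (nseq n q)).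
  elim=> [|n IH] //=; by rewrite cat_path Hq Lq IH.
set N := sumn (map size s).
have Hin := Hs (x :: flatten (nseq N q)) isT (HQ N).
have := @size_le_sumn _ _ _ Hin; rewrite -/N /= size_flatten.
have : N <= sumn (shape (nseq N q)).
  rewrite /shape map_nseq.
  have -> : forall n, sumn (nseq n (size q)) = n * size q.
    by elim=> [|n IH] //=; rewrite IH mulSn.
  by rewrite /q size_rcons leq_pmulr.
move=> H1 H2; have := leq_ltn_trans H1 H2; by rewrite ltnn.
Qed.
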